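(* For $N\ge1$, \[Z_N(\{u\}_N|\{w\}_N)=\frac{\prod_{j=1}^N(1-t)cu_j\prod_{j,k=1}^N(au_j+bw_k)(eu_j+fw_k)}{(cd)^{N(N-1)/2}\prod_{1\le j<k\le N}(u_j-u_k)(w_k-w_j)}\det_{1\le j,k\le N}\Big(\frac{1}{(au_j+bw_k)(eu_j+fw_k)}\Big)\] as rational functions of $u_1,\dots,u_N,w_1,\dots,w_N$.
   Context: Fix complex parameters $t,a,b,c,d,e,f$, all nonzero, with $t\neq1$, satisfying $cd+af=0$ and $tcd+be=0$. The inhomogeneous $L$-operator $L_{aj}(u,w)$ on $W_a\otimes V_j$ ($\cong\mathbb{C}^2\otimes\mathbb{C}^2$, basis $|0\rangle,|1\rangle$) has matrix elements ${}_a\langle\gamma|{}_j\langle\delta|L_{aj}(u,w)|\alpha\rangle_a|\beta\rangle_j=[L(u,w)]^{\gamma\delta}_{\alpha\beta}$: $[L]^{00}_{00}=au+bw$, $[L]^{01}_{01}=atu+bw$, $[L]^{01}_{10}=(1-t)cu$, $[L]^{10}_{01}=(1-t)dw$, $[L]^{10}_{10}=eu+fw$, $[L]^{11}_{11}=eu+tfw$, all others $0$. Define $B_N(u|\{w\}_N)={}_a\langle0|L_{aN}(u,w_N)\cdots L_{a1}(u,w_1)|1\rangle_a$ on $V_1\otimes\cdots\otimes V_N$ and $Z_N(\{u\}_N|\{w\}_N)=\langle1\cdots N|B_N(u_1|\{w\}_N)\cdots B_N(u_N|\{w\}_N)|\Omega\rangle$ with $|\Omega\rangle=|0\rangle^{\otimes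 N}$, $\langle1\cdots N|=\langle1|^{\otimes N}$. *)

(* Defs.v *)
From HB Require Import structures.
From mathcomp Require Import all_boot all_order all_algebra.
Set Implicit Arguments. Unset Strict Implicit. Unset Printing Implicit Defensive.
Import Order.TTheory GRing.Theory Num.Theory.
Local Open Scope ring_scope.

Section Model.
Variable R : numClosedFieldType.
Variables t a b c d e f : R.

(* Lent u w g dl al be = [L(u,w)]^{g dl}_{al be}
   (g = outgoing auxiliary, dl = outgoing quantum,
    al = incoming auxiliary, be = incoming quantum; false = |0>, true = |1>) *)
Definition Lent (u w : R) (g dl al be : bool) : R :=
  match g, dl, al, be with
  | false, false, false, false => a * u + b * w
  | false, true,  false, true  => a * t * u + b * w
  | false, true,  true,  false => (1 - t) * c * u
  | true,  false, false, true  => (1 - t) * d * w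
  | true,  false, true,  false => e * u + f * w
  | true,  true,  true,  true  => e * u + t * f * w
  | _, _, _, _ => 0
  end.

Variable N : nat.

Definition config := {ffun 'I_N -> bool}.

(* Matrix element <out| B_N(u|{w}) |inn> on V_1 (x) ... (x) V_N, where
   B_N(u) = _a<0| L_{aN}(u,w_N) ... L_{a1}(u,w_1) |1>_a.
   The auxiliary path alpha : 'I_N.+1 -> bool has alpha_0 = 1 (input),
   alpha_N = 0 (output); site j maps aux alpha_j to alpha_{j+1}. *)
Definition Bel (u : R) (w : 'I_N -> R) (out inn : config) : R :=
  \sum_(al : {ffun 'I_N.+1 -> bool} | (al ord0 == true) && (al ord_max == false))
    \prod_(j < N) Lent u (w j) (al (lift ord0 j)) (out j)
                          (al (widen_ord (leqnSn N) j)) (inn j).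

Definition applyB (u : R) (w : 'I_N -> R) (psi : config -> R) : config -> R :=
  fun out => \sum_(inn : config) Bel u w out inn * psi inn.

Definition Omega : config -> R :=
  fun s => if s == [ffun => false] then 1 else 0.

(* Z_N = <1...1| B(u_1) B(u_2) ... B(u_N) |Omega>  (B(u_N) acts first) *)
Definition ZN (u w : 'I_N -> R) : R :=
  foldr (fun i psi => applyB (u i) w psi) Omega (enum 'I_N) [ffun => true].

End Model.

(* Main.v *)
Require Import Defs.
From HB Require Import structures.
From mathcomp Require Import all_boot all_order all_algebra all_fingroup.
From mathcomp Require Import ring zify.
From Stdlib Require Import FunctionalExtensionality.
Set Implicit Arguments. Unset Strict Implicit. Unset Printing Implicit Defensive.
Import Order.TTheory GRing.Theory Num.Theory.
Local Open Scope ring_scope.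


Section Generic.
Variable R : comNzRingType.

Definition extf (S : finType) n (q : {ffun 'I_n -> S}) (s : S) : {ffun 'I_n.+1 -> S} :=
  [ffun i => if unlift ord_max i is Some j then q j else s].
Definition restr (S : finType) n (p : {ffun 'I_n.+1 -> S}) : {ffun 'I_n -> S} :=
  [ffun j => p (widen_ord (leqnSn n) j)].

Lemma widen_lift_max n (j : 'I_n) : widen_ord (leqnSn n) j = lift ord_max j.
Proof. by apply: val_inj; rewrite /= /bump leqNgt ltn_ord. Qed.

Lemma extf_widen (S : finType) n q (s : S) (j : 'I_n) :
  extf q s (widen_ord (leqnSn n) j) = q j.
Proof. by rewrite /extf ffunE widen_lift_max liftK. Qed.

Lemma extf_max (S : finType) n q (s : S) : extf q s (@ord_max n) = s.
Proof. by rewrite /extf ffunE unlift_none. Qed.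

Lemma restr_extf (S : finType) n q (s : S) : restr (@extf S n q s) = q.
Proof. by apply/ffunP=> j; rewrite ffunE extf_widen. Qed.

Lemma extf_restr (S : finType) n (p : {ffun 'I_n.+1 -> S}) : extf (restr p) (p ord_max) = p.
Proof.
apply/ffunP=> i; rewrite /extf ffunE; case: unliftP => [j ->|->] //.
by rewrite ffunE widen_lift_max.
Qed.

Lemma sum_ffunS (S : finType) n (F : {ffun 'I_n.+1 -> S} -> R) :
  \sum_p F p = \sum_(q : {ffun 'I_n -> S}) \sum_(s : S) F (extf q s).
Proof.
rewrite pair_big /=.
rewrite (reindex (fun x : {ffun 'I_n -> S} * S => extf x.1 x.2)) //=.
exists (fun p => (restr p, p ord_max)) => [[q s] _|p _] /=.
  by rewrite restr_extf extf_max.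
by rewrite extf_restr.
Qed.

Fixpoint psV (S : finType) n : ('I_n -> S -> S -> R) -> (S -> R) -> S -> R :=
  match n with
  | 0 => fun _ v => v
  | m.+1 => fun M v s1 =>
      \sum_s psV (fun j => M (widen_ord (leqnSn m) j)) v s * M ord_max s s1
  end.

Lemma psV_ext (S : finType) n (M M' : 'I_n -> S -> S -> R) v v' :
  (forall j x y, M j x y = M' j x y) -> (forall x, v x = v' x) ->
  forall s, psV M v s = psV M' v' s.
Proof.
elim: n M M' => [|n IH] M M' HM Hv s //=.
apply: eq_bigr => x _; rewrite HM (IH _ (fun j => M' (widen_ord (leqnSn n) j))) //.
Qed.

Lemma psV_scale (S : finType) n (M : 'I_n -> S -> S -> R) k v s :
  psV M (fun x => k * v x) s = k * psV M v s.
Proof.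
elim: n M s => [|n IH] M s //=.
rewrite mulr_sumr; apply: eq_bigr => x _; by rewrite IH mulrA.
Qed.

Lemma pathsum (S : finType) n (M : 'I_n -> S -> S -> R) (v g : S -> R) :
  \sum_(p : {ffun 'I_n.+1 -> S})
     v (p ord0) * (\prod_(j < n) M j (p (widen_ord (leqnSn n) j)) (p (lift ord0 j))) * g (p ord_max)
  = \sum_s psV M v s * g s.
Proof.
elim: n M g => [|n IH] M g.
  rewrite sum_ffunS.
  transitivity (\sum_(q : {ffun 'I_0 -> S}) \sum_s v s * g s).
    apply: eq_bigr => q _; apply: eq_bigr => s _.
    have E : forall i : 'I_1, extf q s i = s.
      by move=> i; rewrite /extf ffunE; case: unliftP => [[]|].
    by rewrite big_ord0 mulr1 !E.
  rewrite big_const card_ffun !card_ord /=.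
  by rewrite addr0.
rewrite sum_ffunS.
have H0 : forall (q : {ffun 'I_n.+1 -> S}) s, extf q s ord0 = q ord0.
  move=> q s; have -> : (ord0 : 'I_n.+2) = widen_ord (leqnSn n.+1) ord0 by apply: val_inj.
  by rewrite extf_widen.
transitivity (\sum_(q : {ffun 'I_n.+1 -> S}) v (q ord0) *
   (\prod_(j < n) M (widen_ord (leqnSn n) j) (q (widen_ord (leqnSn n) j)) (q (lift ord0 j))) *
   (\sum_s M ord_max (q ord_max) s * g s)).
  apply: eq_bigr => q _; rewrite mulr_sumr; apply: eq_bigr => s _.
  rewrite H0 big_ord_recr /=.
  have E1 : forall j : 'I_n, extf q s (widen_ord (leqnSn n.+1) (widen_ord (leqnSn n) j)) = q (widen_ord (leqnSn n) j).
    by move=> j; rewrite extf_widen.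
  have E2 : forall j : 'I_n, extf q s (lift ord0 (widen_ord (leqnSn n) j)) = q (lift ord0 j).
    move=> j; have -> : lift ord0 (widen_ord (leqnSn n) j) = widen_ord (leqnSn n.+1) (lift ord0 j) by apply: val_inj.
    by rewrite extf_widen.
  have E3 : extf q s (widen_ord (leqnSn n.+1) ord_max) = q ord_max by rewrite extf_widen.
  have E4 : extf q s (lift ord0 ord_max) = s.
    have -> : lift ord0 (@ord_max n) = ord_max by apply: val_inj.
    by rewrite extf_max.
  rewrite E3 E4 ?extf_max; under eq_bigr do rewrite E1 E2.
  by rewrite !mulrA.
etransitivity; first exact: (IH (fun j => M (widen_ord (leqnSn n) j)) (fun x => \sum_s M ord_max x s * g s)).
rewrite /=.
under [RHS]eq_bigr do rewrite mulr_suml.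
rewrite exchange_big /=; apply: eq_bigr => x _; rewrite mulr_sumr.
by apply: eq_bigr => s _; rewrite mulrA.
Qed.

End Generic.


Section Generic2.
Variable R : comNzRingType.

Lemma psV_train (S : finType) n (M M' : 'I_n -> S -> S -> R) (Rm : S -> S -> R) :
  (forall j s s', \sum_g Rm s g * M j g s' = \sum_g M' j s g * Rm g s') ->
  forall v s', psV M (fun s => \sum_g v g * Rm g s) s' = \sum_s psV M' v s * Rm s s'.
Proof.
elim: n M M' => [|n IH] M M' HR v s' //=.
transitivity (\sum_x (\sum_s psV (fun j => M' (widen_ord (leqnSn n) j)) v s * Rm s x) * M ord_max x s').
  apply: eq_bigr => x _; congr (_ * _).
  by apply: (IH (fun j => M (widen_ord (leqnSn n) j))) => j; apply: HR.
set P := psV (fun j => M' (widen_ord (leqnSn n) j)) v.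
transitivity (\sum_s \sum_x P s * Rm s x * M ord_max x s').
  rewrite exchange_big /=; apply: eq_bigr => x _; by rewrite mulr_suml.
transitivity (\sum_s P s * \sum_g M' ord_max s g * Rm g s').
  apply: eq_bigr => s _; rewrite -HR mulr_sumr; apply: eq_bigr => x _; by rewrite mulrA.
transitivity (\sum_s \sum_g P s * M' ord_max s g * Rm g s').
  apply: eq_bigr => s _; rewrite mulr_sumr; apply: eq_bigr => g _; by rewrite mulrA.
rewrite exchange_big /=; apply: eq_bigr => g _; by rewrite mulr_suml.
Qed.

Lemma psV_double (S : finType) n (Lu Lv : 'I_n -> bool -> S -> S -> R) v1 v2 s1 s2 :
  \sum_(mid : {ffun 'I_n -> bool}) psV (fun j => Lu j (mid j)) v1 s1 * psV (fun j => Lv j (mid j)) v2 s2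
  = psV (fun j (x y : S * S) => \sum_m Lu j m x.1 y.1 * Lv j m x.2 y.2) (fun x => v1 x.1 * v2 x.2) (s1, s2).
Proof.
elim: n Lu Lv s1 s2 => [|n IH] Lu Lv s1 s2.
  by rewrite /= big_const card_ffun !card_ord /= addr0.
rewrite sum_ffunS /=.
set Lu' := fun j => Lu (widen_ord (leqnSn n) j).
set Lv' := fun j => Lv (widen_ord (leqnSn n) j).
transitivity (\sum_(q : {ffun 'I_n -> bool}) \sum_m
   \sum_x \sum_y (psV (fun j => Lu' j (q j)) v1 x * psV (fun j => Lv' j (q j)) v2 y)
           * (Lu ord_max m x s1 * Lv ord_max m y s2)).
  apply: eq_bigr => q _; apply: eq_bigr => m _.
  rewrite mulr_suml; apply: eq_bigr => x _; rewrite mulr_sumr; apply: eq_bigr => y _.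
  rewrite extf_max.
  rewrite (@psV_ext _ _ _ _ (fun j => Lu' j (q j)) v1 v1); last 2 first.
  - by move=> j x0 y0; rewrite /Lu' extf_widen.
  - by [].
  rewrite (@psV_ext _ _ _ _ (fun j => Lv' j (q j)) v2 v2); last 2 first.
  - by move=> j x0 y0; rewrite /Lv' extf_widen.
  - by [].
  by rewrite -!mulrA; congr (_ * _); rewrite mulrCA.
rewrite exchange_big /=.
under eq_bigr do rewrite exchange_big /=.
under eq_bigr do under eq_bigr do rewrite exchange_big /=.
transitivity (\sum_m \sum_x \sum_y psV (fun j (x0 y0 : S * S) => \sum_m0 Lu' j m0 x0.1 y0.1 * Lv' j m0 x0.2 y0.2)
      (fun x0 => v1 x0.1 * v2 x0.2) (x, y) * (Lu ord_max m x s1 * Lv ord_max m y s2)).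
  apply: eq_bigr => m _; apply: eq_bigr => x _; apply: eq_bigr => y _.
  by rewrite -mulr_suml IH.
rewrite exchange_big /=.
rewrite (eq_bigr (fun x => \sum_y \sum_m psV (fun j (x0 y0 : S * S) => \sum_m0 Lu' j m0 x0.1 y0.1 * Lv' j m0 x0.2 y0.2)
      (fun x0 => v1 x0.1 * v2 x0.2) (x, y) * (Lu ord_max m x s1 * Lv ord_max m y s2))); last first.
  by move=> x _; rewrite exchange_big.
rewrite pair_big /=; apply: eq_bigr => [[x y]] _ /=.
by rewrite mulr_sumr.
Qed.

End Generic2.


Lemma sum_pair4 (R : comNzRingType) (F : bool * bool -> R) :
  \sum_(g : bool * bool) F g = F (false,false) + F (false,true) + F (true,false) + F (true,true).
Proof.
transitivity (\sum_(i : bool) \sum_(j : bool) F (i, j)).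
  by rewrite pair_big; apply: eq_bigr => [[i j]].
by rewrite !big_bool /=; ring.
Qed.

Section Model.
Variable R : numClosedFieldType.
Variables t a b c d e f : R.

Definition Mrow N u (w : 'I_N -> R) (out inn : config N) : 'I_N -> bool -> bool -> R :=
  fun j x y => Lent t a b c d e f u (w j) y (out j) x (inn j).

Definition dT (s : bool) : R := (s == true)%:R.

Lemma Bel_psV N u (w : 'I_N -> R) out inn :
  Bel t a b c d e f u w out inn = psV (Mrow u w out inn) dT false.
Proof.
have := pathsum (Mrow u w out inn) dT (fun s => (s == false)%:R).
rewrite big_bool /= ?mulr0n ?mulr1n mulr0 add0r mulr1 => <-.
rewrite /Bel big_mkcond; apply: eq_bigr => al _ /=.
rewrite /dT; case: (al ord0); case: (al ord_max) => /=; by rewrite ?mul1r ?mulr1 ?mul0r ?mulr0.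
Qed.

Definition DXl u v wj (o i : bool) (x y : bool * bool) : R :=
  \sum_m Lent t a b c d e f u wj y.1 o x.1 m * Lent t a b c d e f v wj y.2 m x.2 i.

Lemma BB_psV N u v (w : 'I_N -> R) out inn :
  \sum_mid Bel t a b c d e f u w out mid * Bel t a b c d e f v w mid inn
  = psV (fun j => DXl u v (w j) (out j) (inn j)) (fun x => dT x.1 * dT x.2) (false, false).
Proof.
under eq_bigr do rewrite !Bel_psV.
exact: (psV_double (fun j m x y => Lent t a b c d e f u (w j) y (out j) x m)
                   (fun j m x y => Lent t a b c d e f v (w j) y m x (inn j))).
Qed.

Definition Rm (u v : R) (x y : bool * bool) : R :=
  match x, y with
  | (false,false), (false,false) => t * u - v
  | (true,true), (true,true) => t * u - v
  | (false,true), (false,true) => - ((1 - t) * u)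
  | (false,true), (true,false) => t * (u - v)
  | (true,false), (false,true) => u - v
  | (true,false), (true,false) => - ((1 - t) * v)
  | _, _ => 0
  end.

Hypothesis hb : b != 0.
Hypothesis hc : c != 0.
Hypothesis h1 : c * d + a * f = 0.
Hypothesis h2 : t * c * d + b * e = 0.

Lemma de : d = - (a * f) / c.
Proof. apply: (mulfI hc); rewrite mulrCA mulfV // mulr1; apply/eqP; rewrite -addr_eq0 h1 //. Qed.
Lemma ee : e = t * a * f / b.
Proof.
apply: (mulfI hb); rewrite mulrCA mulfV // mulr1.
have : t * (c * d) + b * e = 0 by rewrite mulrA h2.
have -> : c * d = - (a * f) by apply/eqP; rewrite -addr_eq0 h1.
move/eqP; rewrite addrC addr_eq0 => /eqP ->; by rewrite mulrN opprK mulrA.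
Qed.

Lemma RLL u v wj o i s s' :
  \sum_g Rm u v s g * DXl u v wj o i g s' = \sum_g DXl v u wj o i s g * Rm u v g s'.
Proof.
rewrite !sum_pair4 /DXl.
rewrite de ee.
case: o; case: i; case: s => [[] []]; case: s' => [[] []]; rewrite /= ?big_bool /=;
  field; by rewrite ?hb ?hc.
Qed.

End Model.


Section PF.
Variable R : fieldType.

Definition pf (n : nat) (F : R -> R) := exists p : {poly R}, (size p <= n)%N /\ forall x, F x = p.[x].

Lemma pf_ext n F G : pf n F -> (forall x, F x = G x) -> pf n G.
Proof. by move=> [p [Hs Hp]] E; exists p; split=> // x; rewrite -E. Qed.

Lemma pf_le n m F : (n <= m)%N -> pf n F -> pf m F.
Proof. by move=> le [p [Hs Hp]]; exists p; split=> //; apply: leq_trans le. Qed.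

Lemma pf0 n : pf n (fun _ => 0).
Proof. by exists 0; rewrite size_poly0; split=> // x; rewrite horner0. Qed.

Lemma pf_const k : pf 1 (fun _ => k).
Proof. by exists k%:P; split; [exact: size_polyC_leq1| move=> x; rewrite hornerC]. Qed.

Lemma pf_lin al be : pf 2 (fun x => al * x + be).
Proof.
exists (al%:P * 'X + be%:P); split; last by move=> x; rewrite hornerD hornerM hornerC hornerX hornerC.
apply: leq_trans (size_polyD _ _) _; rewrite geq_max (leq_trans (size_polyC_leq1 be)) // andbT.
apply: leq_trans (size_polyMleq _ _) _; rewrite size_polyX.
by case: (size _) (size_polyC_leq1 al) => [|[]].
Qed.

Lemma pf_add n F G : pf n F -> pf n G -> pf n (fun x => F x + G x).
Proof.
move=> [p [Hp Ep]] [q [Hq Eq]]; exists (p + q); split.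
  by apply: leq_trans (size_polyD _ _) _; rewrite geq_max Hp Hq.
by move=> x; rewrite hornerD Ep Eq.
Qed.

Lemma pf_opp n F : pf n F -> pf n (fun x => - F x).
Proof.
move=> [p [Hp Ep]]; exists (- p); split; first by rewrite size_polyN.
by move=> x; rewrite hornerN Ep.
Qed.

Lemma pf_mul n m F G : pf n F -> pf m G -> pf (n + m).-1 (fun x => F x * G x).
Proof.
move=> [p [Hp Ep]] [q [Hq Eq]]; exists (p * q); split.
  apply: leq_trans (size_polyMleq _ _) _.
  by rewrite -!subn1 leq_sub2r // leq_add.
by move=> x; rewrite hornerM Ep Eq.
Qed.

Lemma pf_sum_seq (I : Type) (r : seq I) (P : pred I) (F : I -> R -> R) n :
  (forall i, P i -> pf n (F i)) -> pf n (fun x => \sum_(i <- r | P i) F i x).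
Proof.
move=> H; elim: r => [|i r IH].
  by eapply (pf_ext (pf0 n)); move=> x; rewrite big_nil.
case Pi: (P i).
  by eapply (pf_ext (pf_add (H i Pi) IH)); move=> x; rewrite big_cons Pi.
by eapply (pf_ext IH); move=> x; rewrite big_cons Pi.
Qed.

Lemma pf_sum (I : finType) (P : pred I) (F : I -> R -> R) n :
  (forall i, P i -> pf n (F i)) -> pf n (fun x => \sum_(i | P i) F i x).
Proof. exact: pf_sum_seq. Qed.

Lemma pf_prod_ord k n (F : 'I_n -> R -> R) :
  (forall i, pf k.+1 (F i)) -> pf (k * n).+1 (fun x => \prod_(i < n) F i x).
Proof.
elim: n F => [|n IH] F H.
  rewrite muln0; by eapply (pf_ext (pf_const 1)); move=> x; rewrite big_ord0.
apply: (@pf_le ((k*n).+1 + k.+1).-1).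
  by rewrite mulnS; lia.
eapply (pf_ext (pf_mul (IH (fun i => F (widen_ord (leqnSn n) i)) (fun i => H _)) (H ord_max))); move=> x.
by rewrite big_ord_recr.
Qed.

Lemma pf_eq0 n F (s : seq R) : pf n F -> uniq s -> (n <= size s)%N ->
  (forall x, x \in s -> F x = 0) -> forall x, F x = 0.
Proof.
move=> [p [Hp Ep]] us ls H0 x.
rewrite Ep; suff -> : p = 0 by rewrite horner0.
  apply/eqP; apply: contraT => pn0.
  have Hall : all (root p) s by apply/allP => y ys; rewrite /root -Ep H0.
  by have := leq_trans (max_poly_roots pn0 Hall us) Hp; rewrite ltnNge ls.
Qed.

End PF.


Section Comm.
Variable R : numClosedFieldType.
Variables t a b c d e f : R.
Hypothesis hb : b != 0.
Hypothesis hc : c != 0.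
Hypothesis h1 : c * d + a * f = 0.
Hypothesis h2 : t * c * d + b * e = 0.

Local Notation Bel := (Bel t a b c d e f).
Local Notation applyB := (applyB t a b c d e f).
Local Notation Lent := (Lent t a b c d e f).

Lemma comm_gen u v (h : t * u - v != 0) N (w : 'I_N -> R) out inn :
  \sum_mid Bel u w out mid * Bel v w mid inn = \sum_mid Bel v w out mid * Bel u w mid inn.
Proof.
rewrite !BB_psV.
set v0 := fun x : bool * bool => dT R x.1 * dT R x.2.
have Htr := psV_train (fun j s s' => RLL hb hc h1 h2 u v (w j) (out j) (inn j) s s') v0 (false, false).
have E1 : forall s, \sum_g v0 g * Rm t u v g s = (t * u - v) * v0 s.
  move=> s; rewrite sum_pair4 /v0 /dT /=.
  by case: s => [[] []] /=; ring.
rewrite (psV_ext (M' := fun j => DXl t a b c d e f u v (w j) (out j) (inn j)) (v' := fun s => (t * u - v) * v0 s)) // in Htr.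
rewrite psV_scale sum_pair4 /= in Htr.
rewrite !mulr0 !addr0 in Htr.
apply: (mulfI h); rewrite Htr mulrC.
done.
Qed.

Lemma Lent_pf_u w g dl al be : pf 2 (fun x => Lent x w g dl al be).
Proof.
case: g; case: dl; case: al; case: be => /=;
  first [ exact: pf0
        | exact: (@pf_le _ 1 2 _ isT (pf_const _))
        | (eapply (pf_ext (pf_lin e (t * f * w))); move=> x; ring)
        | (eapply (pf_ext (pf_lin e (f * w))); move=> x; ring)
        | (eapply (pf_ext (pf_lin ((1 - t) * c) 0)); move=> x; ring)
        | (eapply (pf_ext (pf_lin (a * t) (b * w))); move=> x; ring)
        | (eapply (pf_ext (pf_lin a (b * w))); move=> x; ring) ].
Qed.

Lemma pf_scal n k (F : R -> R) : pf n F -> pf n (fun x => k * F x).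
Proof. move=> H; have := pf_mul (pf_const k) H; by rewrite add1n. Qed.
Lemma pf_scar n k (F : R -> R) : pf n F -> pf n (fun x => F x * k).
Proof. move=> H; have := pf_mul H (pf_const k); by rewrite addn1. Qed.

Lemma Bel_pf_u N (w : 'I_N -> R) out inn : pf N.+1 (fun x => Bel x w out inn).
Proof.
apply: pf_sum => al _; have := pf_prod_ord (k := 1) (fun j => Lent_pf_u (w j) (al (lift ord0 j)) (out j) (al (widen_ord (leqnSn N) j)) (inn j)).
by rewrite mul1n.
Qed.

Lemma applyB2 N u v (w : 'I_N -> R) psi out :
  applyB u w (applyB v w psi) out = \sum_inn (\sum_mid Bel u w out mid * Bel v w mid inn) * psi inn.
Proof.
rewrite /Defs.applyB.
under eq_bigr do rewrite mulr_sumr.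
rewrite exchange_big /=; apply: eq_bigr => inn _; rewrite mulr_suml.
by apply: eq_bigr => mid _; rewrite mulrA.
Qed.

Lemma commB N u v (w : 'I_N -> R) psi out :
  applyB u w (applyB v w psi) out = applyB v w (applyB u w psi) out.
Proof.
apply/eqP; rewrite -subr_eq0; apply/eqP.
pose G := fun x => applyB u w (applyB x w psi) out - applyB x w (applyB u w psi) out.
suff : forall x, G x = 0 by move=> /(_ v).
apply: (@pf_eq0 _ N.+1 _ [seq t * u + (k.+1)%:R | k <- iota 0 N.+1]).
- apply: pf_add; last apply: pf_opp.
  + rewrite /Defs.applyB; apply: pf_sum => i _; apply: pf_scal; apply: pf_sum => j _.
    by apply: pf_scar; apply: Bel_pf_u.
  + rewrite /Defs.applyB; apply: pf_sum => i _; apply: pf_scar; apply: Bel_pf_u.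
- rewrite map_inj_uniq ?iota_uniq // => i j /addrI /eqP; rewrite eqr_nat eqSS => /eqP //.
- by rewrite size_map size_iota.
- move=> x /mapP [k _ ->]; apply/eqP; rewrite /G subr_eq0; apply/eqP.
  rewrite !applyB2; apply: eq_bigr => inn _; congr (_ * _).
  apply: comm_gen; rewrite opprD addrA subrr sub0r oppr_eq0 pnatr_eq0 //.
Qed.

End Comm.


Section Sym.
Variable R : numClosedFieldType.
Variables t a b c d e f : R.
Hypothesis hb : b != 0.
Hypothesis hc : c != 0.
Hypothesis h1 : c * d + a * f = 0.
Hypothesis h2 : t * c * d + b * e = 0.

Variable N : nat.
Variable u : 'I_N -> R.
Variable w : 'I_N -> R.

Let Fop := fun (i : 'I_N) (psi : config N -> R) => applyB t a b c d e f (u i) w psi.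

Lemma Fop_comm x y psi : Fop x (Fop y psi) = Fop y (Fop x psi).
Proof. by apply: functional_extensionality => out; rewrite /Fop (commB hb hc h1 h2). Qed.

Lemma foldr_rem psi l x : x \in l -> foldr Fop psi l = Fop x (foldr Fop psi (rem x l)).
Proof.
elim: l => [|y l IH] //= /[1!in_cons]; case: eqP => [-> _|nxy /= xl].
  by rewrite eqxx.
have -> : (y == x) = false by apply/eqP => E; apply: nxy.
by rewrite /= IH // Fop_comm.
Qed.

Lemma foldr_perm psi l1 l2 : perm_eq l1 l2 -> foldr Fop psi l1 = foldr Fop psi l2.
Proof.
elim: l1 l2 => [|x l1 IH] l2 pe.
  by move: pe; rewrite perm_sym => /perm_nilP ->.
have xl2 : x \in l2 by rewrite -(perm_mem pe) mem_head.
rewrite (foldr_rem _ xl2) /= (IH (rem x l2)) //.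
by rewrite -(perm_cons x) (perm_trans pe) // perm_to_rem.
Qed.

End Sym.

Lemma ZN_perm (R : numClosedFieldType) (t a b c d e f : R) (hb : b != 0) (hc : c != 0)
  (h1 : c * d + a * f = 0) (h2 : t * c * d + b * e = 0) N (u w : 'I_N -> R) (s : 'S_N) :
  ZN t a b c d e f (fun i => u (s i)) w = ZN t a b c d e f u w.
Proof.
rewrite /ZN.
have -> : foldr (fun i psi => applyB t a b c d e f (u (s i)) w psi) (Omega R (N:=N)) (enum 'I_N)
        = foldr (fun i psi => applyB t a b c d e f (u i) w psi) (Omega R (N:=N)) (map s (enum 'I_N)).
  by elim: (enum 'I_N) => //= x l ->.
rewrite (foldr_perm hb hc h1 h2 u w _ (l2 := enum 'I_N)) //.
apply: uniq_perm; first by rewrite map_inj_uniq ?enum_uniq //; apply: perm_inj.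
  exact: enum_uniq.
move=> i; rewrite mem_enum; apply/mapP; exists (s^-1 i)%g; first by rewrite mem_enum.
by rewrite permKV.
Qed.


Lemma psV_true (R : comNzRingType) n (M : 'I_n -> bool -> bool -> R) :
  (forall j, M j false true = 0) -> psV M (fun s => (s == true)%:R) true = \prod_j M j true true.
Proof.
elim: n M => [|n IH] M H; first by rewrite big_ord0.
rewrite /= big_bool /= H mulr0 addr0 (IH _ (fun j => H _)) big_ord_recr /=.
by [].
Qed.

Section Frozen.
Variable R : numClosedFieldType.
Variables t a b c d e f : R.

Local Notation Bel := (Bel t a b c d e f).
Local Notation applyB := (applyB t a b c d e f).
Local Notation Lent := (Lent t a b c d e f).
Local Notation Mrow := (Mrow t a b c d e f).

Variable n : nat.
Local Notation wid := (widen_ord (leqnSn n)).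

Lemma Bel_last u (w : 'I_n.+1 -> R) (out inn : config n.+1) :
  Bel u w out inn = \sum_s psV (Mrow u (fun j => w (wid j)) (restr out) (restr inn)) (dT R) s
                          * Lent u (w ord_max) false (out ord_max) s (inn ord_max).
Proof.
rewrite Bel_psV /=; apply: eq_bigr => s _; congr (_ * _).
by apply: psV_ext => // j x y; rewrite /Mrow !ffunE.
Qed.

Definition wX (w : 'I_n.+1 -> R) (X : R) : 'I_n.+1 -> R := fun j => if j == ord_max then X else w j.

Lemma wX_wid w X j : wX w X (wid j) = w (wid j).
Proof. by rewrite /wX; case: eqP => // /(congr1 val) /= E; move: (ltn_ord j); rewrite E ltnn. Qed.
Lemma wX_max w X : wX w X ord_max = X.
Proof. by rewrite /wX eqxx. Qed.
Lemma wX_id w : wX w (w ord_max) = w.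
Proof. by apply: functional_extensionality => j; rewrite /wX; case: eqP => // ->. Qed.

Lemma Lent_pf_w u g dl al be : pf 2 (fun X => Lent u X g dl al be).
Proof.
case: g; case: dl; case: al; case: be => /=;
  first [ exact: pf0
        | exact: (@pf_le _ 1 2 _ isT (pf_const _))
        | (eapply (pf_ext (pf_lin (t * f) (e * u))); move=> x; ring)
        | (eapply (pf_ext (pf_lin f (e * u))); move=> x; ring)
        | (eapply (pf_ext (pf_lin ((1 - t) * d) 0)); move=> x; ring)
        | (eapply (pf_ext (pf_lin b (a * t * u))); move=> x; ring)
        | (eapply (pf_ext (pf_lin b (a * u))); move=> x; ring) ].
Qed.

Lemma Lent_pf_w1 u dl al be : dl != be -> pf 1 (fun X => Lent u X false dl al be).
Proof.
case: dl; case: al; case: be => //= _; first [exact: pf0 | exact: pf_const].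
Qed.

Lemma Bel_pf_X u (w : 'I_n.+1 -> R) (out inn : config n.+1) :
  pf (if out ord_max == inn ord_max then 2 else 1) (fun X => Bel u (wX w X) out inn).
Proof.
eapply pf_ext; last first.
  move=> X; rewrite Bel_last; apply: eq_bigr => s _; rewrite wX_max.
  rewrite (psV_ext (M' := Mrow u (fun j => w (wid j)) (restr out) (restr inn)) (v' := dT R)) //.
  by move=> j x y; rewrite /Mrow wX_wid.
apply: pf_sum => s _; apply: pf_scal.
case: eqP => [_|/eqP ne]; first exact: Lent_pf_w.
exact: Lent_pf_w1.
Qed.

Lemma track (u : 'I_n.+1 -> R) w (l : seq 'I_n.+1) (cc : config n.+1) :
  pf (if cc ord_max then size l else (size l).+1)
     (fun X => foldr (fun i psi => applyB (u i) (wX w X) psi) (Omega R (N:=n.+1)) l cc).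
Proof.
elim: l cc => [|i l IH] cc /=.
  case ccl: (cc ord_max); last exact: pf_const.
  eapply (pf_ext (pf0 R 0)); move=> X; rewrite /Omega; case: eqP => // E.
  by move: ccl; rewrite E ffunE.
rewrite /Defs.applyB; apply: pf_sum => inn _.
have HB := Bel_pf_X (u i) w cc inn.
have HP := IH inn.
case ccl: (cc ord_max); case inl: (inn ord_max); rewrite ccl inl /= in HB HP.
- by have := pf_mul HB HP; rewrite add2n.
- by have := pf_mul HB HP; rewrite add1n.
- by apply: (pf_le _ (pf_mul HB HP)); rewrite add1n leqW.
- by have := pf_mul HB HP; rewrite add2n.
Qed.

Lemma Z_pf (u : 'I_n.+1 -> R) w : pf n.+1 (fun X => ZN t a b c d e f u (wX w X)).
Proof.
have := track u w (enum 'I_n.+1) [ffun => true]; rewrite ffunE size_enum_ord.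
by move=> H; eapply (pf_ext H).
Qed.

Lemma applyB_ext N v (w : 'I_N -> R) psi psi' cc :
  (forall q, psi q = psi' q) -> applyB v w psi cc = applyB v w psi' cc.
Proof. by move=> H; apply: eq_bigr => q _; rewrite H. Qed.

Lemma applyB_scale N v (w : 'I_N -> R) k psi cc :
  applyB v w (fun q => k * psi q) cc = k * applyB v w psi cc.
Proof. by rewrite /Defs.applyB mulr_sumr; apply: eq_bigr => q _; rewrite mulrCA. Qed.

Lemma lift_step (v : R) (w : 'I_n.+1 -> R) (psi : config n.+1 -> R) (phi : config n -> R) :
  (forall q, psi q = if q ord_max then phi (restr q) else 0) ->
  forall cc, applyB v w psi cc =
    if cc ord_max then (a * t * v + b * w ord_max) * applyB v (fun j => w (wid j)) phi (restr cc) else 0.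
Proof.
move=> Hpsi cc; rewrite /Defs.applyB sum_ffunS.
transitivity (\sum_q Bel v w cc (extf q true) * phi q).
  apply: eq_bigr => q _; rewrite big_bool /= !Hpsi !extf_max restr_extf.
  by rewrite mulr0 addr0.
under eq_bigr do rewrite Bel_last extf_max big_bool /=.
case ccl: (cc ord_max) => /=.
  rewrite mulr_sumr; apply: eq_bigr => q _.
  rewrite mulr0 add0r Bel_psV.
  rewrite (psV_ext (M' := Mrow v (fun j => w (wid j)) (restr cc) q) (v' := dT R)) //.
    by rewrite mulrA [_ * (a * t * v + _)]mulrC.
  by move=> j x y; rewrite /Mrow restr_extf.
by rewrite big1 // => q _; rewrite !mulr0 addr0 mul0r.
Qed.

Lemma lift_fold (u : 'I_n.+1 -> R) (w : 'I_n.+1 -> R) (l : seq 'I_n) (psi : config n.+1 -> R) (phi : config n -> R) :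
  (forall q, psi q = if q ord_max then phi (restr q) else 0) ->
  forall cc, foldr (fun i psi => applyB (u (wid i)) w psi) psi l cc =
    if cc ord_max then (\prod_(i <- l) (a * t * u (wid i) + b * w ord_max)) *
        foldr (fun i psi => applyB (u (wid i)) (fun j => w (wid j)) psi) phi l (restr cc) else 0.
Proof.
move=> Hpsi; elim: l => [|i l IH] cc /=.
  by rewrite big_nil mul1r Hpsi.
rewrite (lift_step _ _ (phi := fun q => (\prod_(i <- l) (a * t * u (wid i) + b * w ord_max)) *
        foldr (fun i psi => applyB (u (wid i)) (fun j => w (wid j)) psi) phi l q)) //.
by case: (cc ord_max) => //; rewrite applyB_scale big_cons mulrA.
Qed.

Lemma foldr_scale N (u : 'I_N -> R) (w : 'I_N -> R) (l : seq 'I_N) k (phi : config N -> R) q :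
  foldr (fun i psi => applyB (u i) w psi) (fun q => k * phi q) l q =
  k * foldr (fun i psi => applyB (u i) w psi) phi l q.
Proof.
elim: l q => [|i l IH] q //=.
by rewrite -applyB_scale; apply: applyB_ext.
Qed.

Lemma prod_if (cc : config n) (be : 'I_n -> R) :
  \prod_j (if cc j then 0 else be j) = Omega R cc * \prod_j be j.
Proof.
rewrite /Omega; case: eqP => [->|ne].
  by rewrite mul1r; apply: eq_bigr => j _; rewrite ffunE.
rewrite mul0r; case: (pickP (fun j => cc j)) => [j cj|H]; first by rewrite (bigD1 j) //= cj mul0r.
by exfalso; apply: ne; apply/ffunP => j; rewrite ffunE; exact: H j.
Qed.

Lemma frozen (u : 'I_n.+1 -> R) (w : 'I_n.+1 -> R) (h0 : a * u ord_max + b * w ord_max = 0) :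
  ZN t a b c d e f u w =
    ((1 - t) * c * u ord_max * \prod_(j < n) (e * u ord_max + f * w (wid j)))
    * \prod_(i < n) (a * t * u (wid i) + b * w ord_max)
    * ZN t a b c d e f (fun i => u (wid i)) (fun j => w (wid j)).
Proof.
set K := (1 - t) * c * u ord_max * \prod_(j < n) (e * u ord_max + f * w (wid j)).
have H1 : forall q, applyB (u ord_max) w (Omega R (N:=n.+1)) q =
     if q ord_max then K * Omega R (restr q) else 0.
  move=> q; rewrite /Defs.applyB (bigD1 [ffun => false]) //= big1; last first.
    by move=> i /negbTE ni; rewrite /Omega ni mulr0.
  rewrite /Omega eqxx mulr1 addr0 Bel_last big_bool /= ffunE.
  have Hr : restr [ffun => false] = [ffun => false] :> config n by apply/ffunP => j; rewrite !ffunE.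
  rewrite Hr psV_true; last by move=> j; rewrite /Mrow !ffunE; case: (q (wid j)).
  case ql: (q ord_max) => /=; last by rewrite mulr0 h0 mulr0 addr0.
  rewrite mulr0 addr0.
  transitivity (\prod_j (if restr q j then 0 else e * u ord_max + f * w (wid j)) * ((1 - t) * c * u ord_max)).
    by congr (_ * _); apply: eq_bigr => j _; rewrite !ffunE; case: (q (wid j)).
  rewrite prod_if /K /Omega; case: eqP => _; ring.
rewrite /ZN enum_ordSr foldr_rcons.
have -> : foldr (fun i psi => applyB (u i) w psi) (applyB (u ord_max) w (Omega R (N:=n.+1)))
        (map wid (enum 'I_n))
      = foldr (fun i psi => applyB (u (wid i)) w psi) (applyB (u ord_max) w (Omega R (N:=n.+1))) (enum 'I_n).
  by elim: (enum 'I_n) => //= x l ->.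
rewrite (@lift_fold u w (enum 'I_n) _ (fun q => K * Omega R q) H1) ffunE.
have Hr : restr [ffun => true] = [ffun => true] :> config n by apply/ffunP => j; rewrite !ffunE.
rewrite Hr foldr_scale big_enum /=.
by rewrite mulrA [_ * K]mulrC.
Qed.

End Frozen.


Section RHS.
Variable R : numClosedFieldType.
Variables t a b c d e f : R.

Definition dV n (x : 'I_n -> R) := \det (Vandermonde n (\row_j x j)).
Definition phi (x y : R) := (a * x + b * y) * (e * x + f * y).
Definition Mp n (u w : 'I_n -> R) : 'M[R]_n := \matrix_(j, k) \prod_(l < n | l != k) phi (u j) (w l).
Definition Cst n (u : 'I_n -> R) := \prod_(j < n) ((1 - t) * c * u j).

Variable n : nat.
Local Notation wid := (widen_ord (leqnSn n)).

Lemma pair_prod_recr (F : 'I_n.+1 -> 'I_n.+1 -> R) :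
  \prod_(i < n.+1) \prod_(j < n.+1 | (i < j)%N) F i j =
  (\prod_(i < n) \prod_(j < n | (i < j)%N) F (wid i) (wid j)) * \prod_(i < n) F (wid i) ord_max.
Proof.
rewrite big_ord_recr /= [X in _ * X]big1 ?mulr1; last by move=> j; rewrite ltnNge -ltnS ltn_ord.
rewrite -big_split /=; apply: eq_bigr => i _.
by rewrite big_mkcond big_ord_recr /= ltn_ord -big_mkcond.
Qed.

Lemma dV_rec (x : 'I_n.+1 -> R) :
  dV x = dV (fun i => x (wid i)) * \prod_(i < n) (x ord_max - x (wid i)).
Proof.
rewrite /dV !det_Vandermonde pair_prod_recr; congr (_ * _).
  by apply: eq_bigr => i _; apply: eq_bigr => j _; rewrite !mxE.
by apply: eq_bigr => i _; rewrite !mxE.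
Qed.

Lemma prod_neq_recr (F : 'I_n.+1 -> R) (k : 'I_n.+1) :
  \prod_(l < n.+1 | l != k) F l =
  (\prod_(l < n | wid l != k) F (wid l)) * (if ord_max != k then F ord_max else 1).
Proof. by rewrite big_mkcond big_ord_recr /= -big_mkcond. Qed.

End RHS.

Section RHS2.
Variable R : numClosedFieldType.
Variables t a b c d e f : R.
Local Notation dV := (@dV R).
Local Notation Mp := (Mp a b e f).
Local Notation Cst := (Cst t c).
Local Notation phi := (phi a b e f).

Lemma dV_perm n (x : 'I_n -> R) (s : 'S_n) : dV (fun i => x (s i)) = (-1) ^+ s * dV x.
Proof.
rewrite /dV.
have -> : Vandermonde n (\row_j x (s j)) = Vandermonde n (\row_j x j) *m perm_mx s^-1.
  by rewrite -col_permE; apply/matrixP => i j; rewrite !mxE.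
by rewrite det_mulmx det_perm odd_permV mulrC.
Qed.

Lemma Mp_perm n (u w : 'I_n -> R) (s : 'S_n) : \det (Mp (fun i => u (s i)) w) = (-1) ^+ s * \det (Mp u w).
Proof.
have -> : Mp (fun i => u (s i)) w = perm_mx s *m Mp u w.
  by rewrite -row_permE; apply/matrixP => i j; rewrite !mxE.
by rewrite det_mulmx det_perm.
Qed.

Lemma Cst_perm n (u : 'I_n -> R) (s : 'S_n) : Cst (fun i => u (s i)) = Cst u.
Proof. by rewrite /Cst [RHS](reindex_inj (@perm_inj _ s)). Qed.

Lemma dV_eq0 n (x : 'I_n -> R) i j : i != j -> x i = x j -> dV x = 0.
Proof.
move=> nij xij; rewrite /dV -det_tr; apply: (determinant_alternate nij) => k.
by rewrite !mxE xij.
Qed.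

Lemma pf_exp i : pf i.+1 (fun X : R => X ^+ i).
Proof. exists ('X^i); split; first by rewrite size_polyXn. by move=> x; rewrite hornerXn. Qed.

Lemma pf_det m k (A : R -> 'M[R]_m) :
  (forall j l, pf k.+1 (fun X => A X j l)) -> pf (k * m).+1 (fun X => \det (A X)).
Proof.
move=> H; apply: pf_sum => s _; apply: pf_scal.
exact: pf_prod_ord (fun i => H i (s i)).
Qed.

Variable n : nat.
Local Notation wid := (widen_ord (leqnSn n)).
Local Notation wX := (@wX R n).

Lemma lift_max_neq (j : 'I_n) : lift ord_max j != ord_max.
Proof. by rewrite eq_sym neq_lift. Qed.

Lemma max_neq_lift (j : 'I_n) : ord_max != lift ord_max j.
Proof. by rewrite eq_sym lift_max_neq. Qed.

Lemma wX_lift w X (j : 'I_n) : wX w X (lift ord_max j) = w (lift ord_max j).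
Proof. by rewrite /wX (negbTE (lift_max_neq j)). Qed.

Lemma dV_pf (w : 'I_n.+1 -> R) : pf n.+1 (fun X => dV (wX w X)).
Proof.
eapply pf_ext; last first.
  move=> X; rewrite /dV (expand_det_col _ ord_max).
  apply: eq_bigr => i _.
  rewrite /cofactor.
  have -> : row' i (col' ord_max (Vandermonde n.+1 (\row_j wX w X j)))
          = row' i (col' ord_max (Vandermonde n.+1 (\row_j w j))).
    by apply/matrixP => k l; rewrite !mxE wX_lift.
  by rewrite !mxE wX_max.
apply: pf_sum => i _; apply: pf_scar; apply: (pf_le _ (pf_exp i)); exact: ltn_ord.
Qed.

Lemma phi_pf x : pf 3 (fun X => phi x X).
Proof.
have := pf_mul (pf_lin b (a * x)) (pf_lin f (e * x)) => H.
by eapply (pf_ext H) => X; rewrite /phi; ring.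
Qed.

Lemma Mp_pf (u w : 'I_n.+1 -> R) : pf (2 * n).+1 (fun X => \det (Mp u (wX w X))).
Proof.
eapply pf_ext; last first.
  move=> X; rewrite (expand_det_col _ ord_max).
  apply: eq_bigr => i _.
  rewrite /cofactor mxE.
  have -> : \prod_(l < n.+1 | l != ord_max) phi (u i) (wX w X l)
          = \prod_(l < n.+1 | l != ord_max) phi (u i) (w l).
    by apply: eq_bigr => l /negbTE nl; rewrite /wX nl.
  by [].
apply: pf_sum => i _; apply: pf_scal; apply: pf_scal.
apply: pf_det => j k; rewrite /=.
eapply pf_ext; last first.
  move=> X; rewrite !mxE (bigD1 ord_max) /=; last by rewrite eq_sym lift_max_neq.
  rewrite wX_max.
  have -> : \prod_(l < n.+1 | (l != lift ord_max k) && (l != ord_max)) phi (u (lift i j)) (wX w X l)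
          = \prod_(l < n.+1 | (l != lift ord_max k) && (l != ord_max)) phi (u (lift i j)) (w l).
    by apply: eq_bigr => l /andP [_ /negbTE nl]; rewrite /wX nl.
  by [].
apply: pf_scar; exact: phi_pf.
Qed.

Lemma Mp_eq0 (u w : 'I_n.+1 -> R) (j : 'I_n) : \det (Mp u (wX w (w (wid j)))) = 0.
Proof.
rewrite -det_tr; apply: (determinant_alternate (i1 := ord_max) (i2 := wid j)).
  by rewrite eq_sym widen_lift_max lift_max_neq.
move=> r; rewrite !mxE !prod_neq_recr /= eqxx /=.
have Hn : (ord_max != wid j) by rewrite eq_sym widen_lift_max lift_max_neq.
have Hw : forall l : 'I_n, (wid l != ord_max) = true by move=> l; rewrite widen_lift_max lift_max_neq.
have Hij : forall l : 'I_n, (wid l != wid j) = (l != j).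
  move=> l; congr negb; apply/eqP/eqP => [H|->//]; apply: val_inj; exact: (congr1 val H).
rewrite Hn wX_max mulr1.
have E : forall l : 'I_n, wX w (w (wid j)) (wid l) = w (wid l).
  by move=> l; rewrite wX_wid.
rewrite (eq_bigl _ _ Hw) (eq_bigl _ _ Hij).
under eq_bigr do rewrite E.
under [in RHS]eq_bigr do rewrite E.
by rewrite (bigD1 j) //= mulrC.
Qed.

Lemma Mp_frozen (u w : 'I_n.+1 -> R) X (h0 : a * u ord_max + b * X = 0) :
  \det (Mp u (wX w X)) =
  (\prod_(l < n) phi (u ord_max) (w (wid l))) * (\prod_(j < n) phi (u (wid j)) X)
  * \det (Mp (fun i => u (wid i)) (fun l => w (wid l))).
Proof.
rewrite (expand_det_row _ ord_max) (bigD1 ord_max) //= big1 ?addr0; last first.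
  move=> k nk; rewrite mxE (bigD1 ord_max) /=; last by rewrite eq_sym.
  by rewrite wX_max /phi h0 !mul0r.
rewrite mxE /cofactor.
have -> : (-1) ^+ (@ord_max n + @ord_max n) = 1 :> R.
  by rewrite exprD -exprMn mulrNN mulr1 expr1n.
rewrite mul1r.
have -> : row' ord_max (col' ord_max (Mp u (wX w X)))
        = diag_mx (\row_j phi (u (wid j)) X) *m Mp (fun i => u (wid i)) (fun l => w (wid l)).
  rewrite mul_diag_mx; apply/matrixP => j k; rewrite !mxE prod_neq_recr max_neq_lift wX_max.
  rewrite -!widen_lift_max mulrC; congr (_ * _).
  apply: eq_big => [l|l _]; last by rewrite wX_wid.
  congr negb; apply/eqP/eqP => [H|->//]; apply: val_inj; exact: (congr1 val H).
rewrite det_mulmx det_diag mulrA; congr (_ * _ * _).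
  rewrite prod_neq_recr eqxx /= mulr1; apply: eq_big => [l|l _]; first by rewrite widen_lift_max lift_max_neq.
  by rewrite wX_wid.
by apply: eq_bigr => j _; rewrite mxE.
Qed.

End RHS2.


Section Core.
Variable R : numClosedFieldType.
Variables t a b c d e f : R.
Hypothesis ha : a != 0.
Hypothesis hb : b != 0.
Hypothesis hc : c != 0.
Hypothesis h1 : c * d + a * f = 0.
Hypothesis h2 : t * c * d + b * e = 0.

Local Notation dV := (@dV R).
Local Notation Mp := (Mp a b e f).
Local Notation Cst := (Cst t c).
Local Notation phi := (phi a b e f).
Local Notation ZN := (ZN t a b c d e f).
Local Notation wid := (widen_ord (leqnSn _)).

Lemma per_i ul ui wi x (hx : a * ul + b * x = 0) :
  (- (c * d)) * ((ul - ui) * (x - wi) * (e * ul + f * wi) * (a * t * ui + b * x))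
  = phi ul wi * phi ui x.
Proof.
have -> : x = - (a * ul) / b.
  apply: (mulfI hb); rewrite mulrCA mulfV // mulr1; apply/eqP; rewrite -addr_eq0 addrC hx //.
rewrite /phi (de hc h1) (ee hb h1 h2); field; by rewrite hb hc.
Qed.

Lemma alg (K A B D1 D2 Z0 C0 Dn P1 P2 P3 P4 Q1 Q2 Cn : R) : K = A * B -> A * D1 * D2 * Z0 = Cn * Dn ->
  B * (P1 * P2 * P3 * P4) = Q1 * Q2 ->
  K * (D1 * P1) * (D2 * P2) * (C0 * P3 * P4 * Z0) = (Cn * C0) * (Q1 * Q2 * Dn).
Proof.
move=> -> H1 H2; transitivity ((A * D1 * D2 * Z0) * C0 * (B * (P1 * P2 * P3 * P4))); first by ring.
by rewrite H1 H2; ring.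
Qed.

Theorem core n : forall (u w : 'I_n -> R), injective u -> injective w ->
  (forall j k, a * u j + b * w k != 0) ->
  (- (c * d)) ^+ 'C(n, 2) * dV u * dV w * ZN u w = Cst u * \det (Mp u w).
Proof.
elim: n => [|n IH] u w hu hw hab.
  rewrite /dV !det_mx00 /Cst big_ord0 bin0n expr0 !mul1r /ZN.
  have -> : enum 'I_0 = [::] by apply/size0nil; rewrite size_enum_ord.
  rewrite /= /Omega; case: eqP => // ne; exfalso; apply: ne; apply/ffunP => -[m hm]; exfalso; by rewrite ltn0 in hm.

pose K := (- (c * d)) ^+ 'C(n.+1, 2).
pose L X := K * dV u * dV (wX w X) * ZN u (wX w X).
pose Rr X := Cst u * \det (Mp u (wX w X)).
suff H : forall X, L X - Rr X = 0.
  by have := H (w ord_max); rewrite /L /Rr wX_id => /eqP; rewrite subr_eq0 => /eqP.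
apply: (@pf_eq0 _ (2 * n).+1 _ ([seq - (a * u i) / b | i <- enum 'I_n.+1] ++ [seq w (wid j) | j <- enum 'I_n])).
- apply: pf_add; last (apply: pf_opp; apply: pf_scal; exact: Mp_pf).
  have := pf_mul (dV_pf w) (Z_pf t a b c d e f u w).
  have -> : ((n.+1 + n.+1).-1 = (2 * n).+1)%N by lia.
  move=> H0; eapply (pf_ext (pf_scal (K * dV u) H0)) => X.
  by rewrite /L !mulrA.
- rewrite cat_uniq; apply/and3P; split.
  + rewrite map_inj_uniq ?enum_uniq // => i j E; apply: hu; apply: (mulfI ha).
    by apply: oppr_inj; apply: (mulIf (invr_neq0 hb)).
  + apply/hasPn => y /mapP [j _ ->]; apply/mapP => -[i _ E].
    by move/eqP: (hab i (wid j)); apply; rewrite E; field.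
  + rewrite map_inj_uniq ?enum_uniq // => i j E; apply: val_inj.
    by have := congr1 val (hw _ _ E).
- by rewrite size_cat !size_map -!enumT !size_enum_ord; lia.
move=> x; rewrite mem_cat => /orP [] /mapP [i _ ->]; last first.
  rewrite /L /Rr Mp_eq0 (@dV_eq0 _ _ (wX w (w (wid i))) ord_max (wid i)); first by rewrite !(mulr0, mul0r) subrr.
    by rewrite widen_lift_max eq_sym lift_max_neq.
  by rewrite wX_max wX_wid.
set x0 := - (a * u i) / b.
pose s : 'S_n.+1 := tperm i ord_max.
pose u' := fun k => u (s k).
have hu' : injective u' by move=> k l /hu /perm_inj.
set sg := (-1) ^+ s : R.
have Esg : sg * sg = 1 by rewrite /sg; case: (odd_perm s); rewrite ?expr1 ?expr0 ?mulrNN ?mulr1.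
have dVu : dV u = sg * dV u'.
  by rewrite /u' dV_perm mulrA Esg mul1r.
have Mpu : \det (Mp u (wX w x0)) = sg * \det (Mp u' (wX w x0)).
  by rewrite /u' Mp_perm mulrA Esg mul1r.
have Zu : ZN u (wX w x0) = ZN u' (wX w x0) by rewrite /u' (ZN_perm hb hc h1 h2).
have Cu : Cst u = Cst u' by rewrite /u' Cst_perm.
suff Hfr : K * dV u' * dV (wX w x0) * ZN u' (wX w x0) = Cst u' * \det (Mp u' (wX w x0)).
  rewrite /L /Rr dVu Mpu Zu Cu.
  apply/eqP; rewrite subr_eq0; apply/eqP.
  by rewrite -[in RHS]mulrCA -Hfr; ring.
have ul : u' ord_max = u i by rewrite /u' /s tpermR.
have h0 : a * u' ord_max + b * x0 = 0 by rewrite ul /x0; field.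
have h0' : a * u' ord_max + b * wX w x0 ord_max = 0 by rewrite wX_max.
rewrite (frozen _ _ _ _ _ h0') (Mp_frozen _ _ _ h0) dV_rec [dV (wX w x0)]dV_rec.
have Ew : (fun j => wX w x0 (wid j)) = (fun j => w (wid j)).
  by apply: functional_extensionality => j; rewrite wX_wid.
rewrite Ew wX_max.
have IHe := IH (fun i => u' (wid i)) (fun j => w (wid j)).
have iu : injective (fun i : 'I_n => u' (wid i)).
  by move=> k l /hu' /(congr1 (@nat_of_ord _)) /= E; apply: ord_inj.
have iw : injective (fun i : 'I_n => w (wid i)).
  by move=> k l /hw /(congr1 (@nat_of_ord _)) /= E; apply: ord_inj.
have {IHe}IHe := IHe iu iw (fun j k => hab _ _).
have P2 : \prod_(i0 < n) (x0 - wX w x0 (wid i0)) = \prod_(i0 < n) (x0 - w (wid i0)).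
  by apply: eq_bigr => j _; rewrite wX_wid.
have P3 : \prod_(j < n) (e * u' ord_max + f * wX w x0 (wid j)) = \prod_(j < n) (e * u' ord_max + f * w (wid j)).
  by apply: eq_bigr => j _; rewrite wX_wid.
rewrite P2 P3.
have Cs : Cst u' = Cst (fun i => u' (wid i)) * ((1 - t) * c * u' ord_max) by rewrite /Cst big_ord_recr.
rewrite Cs.
have Hprod : (- (c * d)) ^+ n * (\prod_(i0 < n) (u' ord_max - u' (wid i0))
     * \prod_(i0 < n) (x0 - w (wid i0)) * \prod_(j < n) (e * u' ord_max + f * w (wid j))
     * \prod_(i0 < n) (a * t * u' (wid i0) + b * x0))
   = \prod_(l < n) phi (u' ord_max) (w (wid l)) * \prod_(j < n) phi (u' (wid j)) x0.
  have Ec : (- (c * d)) ^+ n = \prod_(i0 < n) (- (c * d)) by rewrite prodr_const card_ord.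
  rewrite Ec -!big_split /=.
  by apply: eq_bigr => j _; rewrite -per_i //; ring.
have HK : K = (- (c * d)) ^+ 'C(n, 2) * (- (c * d)) ^+ n by rewrite /K binS bin1 exprD.
eapply alg; [exact: HK | | exact: Hprod]. exact: IHe.
Qed.
End Core.


Lemma pair_count (R : numClosedFieldType) N (k0 : R) :
  \prod_(j < N) \prod_(k < N | (j < k)%N) k0 = k0 ^+ 'C(N, 2).
Proof.
elim: N => [|N IH]; first by rewrite big_ord0.
rewrite (pair_prod_recr (fun _ _ => k0)) IH prodr_const card_ord binS bin1 exprD.
done.
Qed.

Theorem mainTheorem7 (R : numClosedFieldType) (t a b c d e f : R)
  (ht0 : t != 0) (ha : a != 0) (hb : b != 0) (hc : c != 0) (hd : d != 0)
  (he : e != 0) (hf : f != 0) (ht1 : t != 1)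
  (h1 : c * d + a * f = 0) (h2 : t * c * d + b * e = 0)
  (N : nat) (hN : (1 <= N)%N) (u w : 'I_N -> R)
  (hu : injective u) (hw : injective w)
  (hab : forall j k, a * u j + b * w k != 0)
  (hef : forall j k, e * u j + f * w k != 0) :
  ZN t a b c d e f u w =
    (\prod_(j < N) ((1 - t) * c * u j)
       * \prod_(j < N) \prod_(k < N) ((a * u j + b * w k) * (e * u j + f * w k)))
    / ((c * d) ^+ ((N * N.-1)./2)
       * \prod_(j < N) \prod_(k < N | (j < k)%N) ((u j - u k) * (w k - w j)))
    * \det (\matrix_(j < N, k < N)
              ((a * u j + b * w k) * (e * u j + f * w k))^-1).
Proof.
have hcore := core ha hb hc h1 h2 hu hw hab.
set M := \matrix_(j < N, k < N) ((a * u j + b * w k) * (e * u j + f * w k))^-1.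
have hphi : forall j k, phi a b e f (u j) (w k) != 0.
  by move=> j k; rewrite /phi mulf_neq0.
have EMp : \det (Mp a b e f u w) =
     (\prod_(j < N) \prod_(k < N) ((a * u j + b * w k) * (e * u j + f * w k))) * \det M.
  have -> : Mp a b e f u w = diag_mx (\row_j \prod_(k < N) phi a b e f (u j) (w k)) *m M.
    rewrite mul_diag_mx; apply/matrixP => j k; rewrite !mxE [in RHS](bigD1 k) //=.
    rewrite /phi; field; by rewrite hab hef.
  by rewrite det_mulmx det_diag; congr (_ * _); apply: eq_bigr => j _; rewrite mxE.
have dVu : dV u = \prod_(i < N) \prod_(j < N | (i < j)%N) (u j - u i).
  by rewrite /dV det_Vandermonde; apply: eq_bigr => i _; apply: eq_bigr => j _; rewrite !mxE.
have dVw : dV w = \prod_(i < N) \prod_(j < N | (i < j)%N) (w j - w i).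
  by rewrite /dV det_Vandermonde; apply: eq_bigr => i _; apply: eq_bigr => j _; rewrite !mxE.
have ED : \prod_(j < N) \prod_(k < N | (j < k)%N) ((u j - u k) * (w k - w j))
        = (-1) ^+ 'C(N, 2) * dV u * dV w.
  rewrite dVu dVw -pair_count -!big_split /=; apply: eq_bigr => i _.
  rewrite -!big_split /=; apply: eq_bigr => j _; ring.
have nz : forall x : 'I_N -> R, injective x -> \prod_(i < N) \prod_(j < N | (i < j)%N) (x j - x i) != 0.
  move=> x hx; rewrite prodf_seq_neq0; apply/allP => i _; apply/implyP => _.
  rewrite prodf_seq_neq0; apply/allP => j _; apply/implyP => lij.
  rewrite subr_eq0; apply/eqP => /hx E; by rewrite E ltnn in lij.
have hdVu : dV u != 0 by rewrite dVu nz.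
have hdVw : dV w != 0 by rewrite dVw nz.
have hcd : c * d != 0 by rewrite mulf_neq0.
rewrite bin2 in hcore; rewrite ED -bin2.
have hK : (- (c * d)) ^+ 'C(N, 2) != 0 by rewrite expf_neq0 // oppr_eq0.
apply: (mulfI hK); apply: (mulfI hdVu); apply: (mulfI hdVw).
rewrite bin2 [LHS](_ : _ = (- (c * d)) ^+ (N * N.-1)./2 * dV u * dV w * ZN t a b c d e f u w); last by ring.
rewrite hcore EMp -bin2.
have -> : (- (c * d)) ^+ 'C(N, 2) = (-1) ^+ 'C(N, 2) * (c * d) ^+ 'C(N, 2).
  by rewrite -exprMn mulN1r.
have hP : (-1) ^+ 'C(N, 2) != 0 :> R by rewrite expf_neq0 // oppr_eq0 oner_eq0.
have hQ : (c * d) ^+ 'C(N, 2) != 0 by rewrite expf_neq0.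
rewrite /Cst.
move: hP hQ; set P := (-1) ^+ 'C(N, 2); set Q := (c * d) ^+ 'C(N, 2) => hP hQ.
field.
by rewrite hdVu hdVw hP hQ.
Qed.
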